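(* For every $\varepsilon>0$ there exists $n_0$ such that for all $n\ge n_0$ the following holds. Let $\mathcal F\subseteq 2^{[n]}$ be a family all of whose sets have size in $[n/2-n^{2/3},\,n/2+n^{2/3}]$. If for every $F\in\mathcal F$ we have $\nabla^j_{\mathcal F}(F)\le\varepsilon n^4$ for all $j\ge4$, then $|\mathcal F|\le(4+400\varepsilon)\binom{n}{\lfloor n/2\rfloor}$.
   Context: $\nabla^j_{\mathcal F}(F):=|\{G\in\mathcal F:\ F\subseteq G,\ |G|=|F|+j\}|$. *)

(* Defs.v *)
From HB Require Import structures.
From mathcomp Require Import all_boot all_order all_algebra.
From mathcomp Require Import all_classical all_reals all_analysis.
Set Implicit Arguments. Unset Strict Implicit. Unset Printing Implicit Defensive.

Definition nabla (n : nat) (fam : {set {set 'I_n}}) (F : {set 'I_n}) (j : nat) : nat :=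
  #|[set G in fam | (F \subset G) && (#|G| == #|F| + j)%N]|.

(* Main.v *)
Require Import Defs.
From HB Require Import structures.
From mathcomp Require Import all_boot all_order all_algebra.
From mathcomp Require Import all_classical all_reals all_analysis.
From mathcomp Require Import all_boot all_order all_algebra.
From mathcomp Require Import zify ring lra.
Import Order.TTheory GRing.Theory Num.Theory.
Set Implicit Arguments. Unset Strict Implicit. Unset Printing Implicit Defensive.

Section Comb.
Variables (n : nat) (fam : {set {set 'I_n}}).

Fixpoint tch (k : nat) (S : {set 'I_n}) : nat :=
  match k with 0 => 1 | k'.+1 => \sum_(x : 'I_n | x \in S) (if S :\ x \in fam then 0 else tch k' (S :\ x)) end.
Definition tc (S : {set 'I_n}) := tch #|S| S.

Lemma tc_rec (S : {set 'I_n}) : 0 < #|S| ->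
  tc S = \sum_(x in S) (if S :\ x \in fam then 0 else tc (S :\ x)).
Proof.
rewrite /tc; case E: #|S| => [|k] // _ /=.
apply: eq_bigr => x xS.
by move: E; rewrite (cardsD1 x S) xS add1n => -[->].
Qed.

Definition PP (G : {set 'I_n}) := \sum_(F in fam | F \proper G) tc F * (#|G| - #|F|)`!.
Definition SS (G : {set 'I_n}) := \sum_(F in fam | F \subset G) tc F * (#|G| - #|F|)`!.

Lemma SS_PP (H : {set 'I_n}) : SS H = PP H + (if H \in fam then tc H else 0).
Proof.
rewrite /SS /PP; case: ifP => Hf.
  rewrite (bigD1 H) /=; last by rewrite Hf subxx.
  rewrite subnn fact0 muln1 addnC; congr (_ + _).
  apply: eq_bigl => F; rewrite properEneq; by case: (F \in fam); case: (F == H); case: (F \subset H).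
rewrite addn0; apply: eq_bigl => F; rewrite properEneq.
by case: eqP => [->|_]; rewrite ?Hf ?andbT.
Qed.

Lemma exch (G : {set 'I_n}) k : #|G| = k.+1 -> \sum_(x in G) SS (G :\ x) = PP G.
Proof.
move=> cG; rewrite /SS /PP.
rewrite (eq_bigr (fun x => \sum_(F in fam)
   (if F \subset G :\ x then tc F * (k - #|F|)`! else 0))); last first.
  move=> x xG; rewrite big_mkcondr /=.
  have cx : #|G :\ x| = k by move: cG; rewrite (cardsD1 x G) xG add1n => -[].
  by rewrite cx.
rewrite exchange_big /= [RHS]big_mkcondr /=.
apply: eq_bigr => F Ff.
rewrite -big_mkcondr /=.
rewrite (eq_bigl (fun x => (F \subset G) && (x \in G :\: F))); last first.
  move=> x; rewrite in_setD subsetD1.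
  case xG: (x \in G); case FG: (F \subset G); rewrite ?andbT ?andbF //=.
case FG: (F \subset G); last first.
  rewrite big_pred0 //; by move: FG; rewrite properEneq => ->; rewrite andbF.
rewrite (eq_bigl (fun x => x \in G :\: F)) // sum_nat_const.
rewrite cardsD (setIidPr FG) cG.
have cF : #|F| <= k.+1 by rewrite -cG subset_leq_card.
rewrite properEneq FG andbT.
case: eqP => [->|neFG] /=; first by rewrite cG subnn.
have : #|F| != k.+1.
  apply/eqP => eF; apply: neFG; apply/eqP; rewrite eqEcard FG cG eF leqnn //.
move=> nF.
have lF : #|F| <= k by rewrite -ltnS ltn_neqAle nF cF.
by rewrite subSn // factS mulnCA.
Qed.

Lemma key (G : {set 'I_n}) : (#|G|)`! = tc G + PP G.
Proof.
move: {2}#|G| (erefl #|G|) => k; elim: k G => [|k IH] G cG.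
  have -> : G = set0 by apply/eqP; rewrite -cards_eq0 cG.
  rewrite cards0 /tc cards0 /= /PP big1 // => F /andP[_ pF].
  by move: (proper_card pF); rewrite cards0.
rewrite cG factS -cG -sum_nat_const.
rewrite (eq_bigr (fun x => tc (G :\ x) + PP (G :\ x))); last first.
  move=> x xG; have cx : #|G :\ x| = k by move: cG; rewrite (cardsD1 x G) xG add1n => -[].
  by rewrite -IH // cx.
rewrite (eq_bigr (fun x => (if G :\ x \in fam then 0 else tc (G :\ x)) + SS (G :\ x))); last first.
  move=> x _; rewrite SS_PP; case: ifP => _; rewrite ?add0n ?addn0 //.
  by rewrite addnC.
by rewrite big_split /= -tc_rec ?cG // (exch cG).
Qed.

Lemma lym : \sum_(F in fam) tc F * (n - #|F|)`! <= n`!.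
Proof.
have := key [set: 'I_n]; rewrite cardsT card_ord => ->.
have -> : \sum_(F in fam) tc F * (n - #|F|)`! = SS [set: 'I_n].
  rewrite /SS cardsT card_ord; apply: eq_bigl => F; by rewrite subsetT andbT.
rewrite SS_PP [X in _ <= X]addnC leq_add2l; case: ifP => //.
Qed.

Lemma main_id : \sum_(G in fam) (#|G|)`! * (n - #|G|)`! =
  \sum_(F in fam) tc F * \sum_(G in fam | F \subset G) (#|G| - #|F|)`! * (n - #|G|)`!.
Proof.
rewrite (eq_bigr (fun G => SS G * (n - #|G|)`!)); last first.
  by move=> G Gf; rewrite SS_PP Gf key addnC.
rewrite /SS.
rewrite (eq_bigr (fun G : {set 'I_n} => \sum_(F in fam | F \subset G) tc F * ((#|G| - #|F|)`! * (n - #|G|)`!))); last first.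
  by move=> G _; rewrite big_distrl /=; apply: eq_bigr => F _; rewrite mulnA.
rewrite (exchange_big_dep (fun F => F \in fam)) /=; last by move=> G F _ /andP[].
apply: eq_bigr => F Ff; rewrite big_distrr /=.
by apply: eq_bigl => G; rewrite Ff.
Qed.

End Comb.
Lemma bin_step N j : j.+1 <= N - j -> 'C(N, j) <= 'C(N, j.+1).
Proof.
move=> h.
have : j.+1 * 'C(N, j) <= (N - j) * 'C(N, j) by rewrite leq_mul2r h orbT.
by rewrite -mul_bin_left leq_pmul2l.
Qed.

Lemma bin_mono N i j : i <= j -> j.*2 <= N -> 'C(N, i) <= 'C(N, j).
Proof.
elim: j => [|j IH] hij hj; first by move: hij; rewrite leqn0 => /eqP->.
case: (ltngtP i j.+1) => [hlt||->] //; last by move: hij; rewrite leqNgt => /negP.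
apply: leq_trans (IH _ _) _ => //; first lia.
apply: bin_step; lia.
Qed.

Lemma half_dbl N : N./2.*2 <= N.
Proof. by rewrite -{2}(odd_double_half N) leq_addl. Qed.

Lemma bin_ge N i j : i <= j -> i <= N - j -> j <= N -> 'C(N, i) <= 'C(N, j).
Proof.
move=> h1 h2 h3; case: (leqP j.*2 N) => h; first exact: bin_mono.
rewrite -(bin_sub h3); apply: bin_mono => //; lia.
Qed.

Lemma bin_half N k : 'C(N, k) <= 'C(N, N./2).
Proof.
case: (leqP k N) => kN; last by rewrite bin_small.
have hd := half_dbl N; have ho := odd_double_half N.
case: (leqP k N./2) => h; first exact: bin_mono.
rewrite -(bin_sub kN); apply: bin_mono => //.
move: ho; case: (odd N) => /= ho; lia.
Qed.

Lemma fact_le6 m j : 6 <= j -> j + 6 <= m -> j`! * (m - j)`! <= 720 * (m - 6)`!.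
Proof.
move=> h1 h2.
have e1 : 'C(m, j) * (j`! * (m - j)`!) = m`! by apply: bin_fact; lia.
have e2 : 'C(m, 6) * (6`! * (m - 6)`!) = m`! by apply: bin_fact; lia.
have hb : 'C(m, 6) <= 'C(m, j) by apply: bin_ge; lia.
have hp : 0 < 'C(m, j) by rewrite bin_gt0; lia.
rewrite -(leq_pmul2l hp) e1 -[X in X <= _]e2.
by rewrite (_ : 720 = 6`!) // -mulnA leq_mul2r hb orbT.
Qed.

Lemma nabla_le_bin n (fam : {set {set 'I_n}}) (F : {set 'I_n}) j : nabla fam F j <= 'C(n - #|F|, j).
Proof.
rewrite /nabla.
set A := [set G in fam | _].
have inj : {in A &, injective (fun G => G :\: F)}.
  move=> G1 G2; rewrite !inE => /andP[_ /andP[s1 _]] /andP[_ /andP[s2 _]] /= e.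
  by rewrite -(setID G1 F) -(setID G2 F) (setIidPr s1) (setIidPr s2) e.
rewrite -(card_in_imset inj).
apply: leq_trans (_ : #|[set B : {set 'I_n} | B \subset ~: F & #|B| == j]| <= _).
  apply: subset_leq_card; apply/subsetP => B /imsetP[G]; rewrite !inE => /andP[_ /andP[s /eqP c]] ->.
  by rewrite cardsD (setIidPr s) c addKn eqxx andbT setDE subsetIr.
rewrite cards_draws.
have := cardsC F; rewrite card_ord => e.
by rewrite (_ : #|~: F| = n - #|F|) //; lia.
Qed.

Lemma group_lvl n (fam : {set {set 'I_n}}) (F : {set 'I_n}) (h : nat -> nat) :
  \sum_(G in fam | F \subset G) h #|G| =
  \sum_(j < (n - #|F|).+1) nabla fam F j * h (#|F| + j).
Proof.
rewrite (partition_big (fun G : {set 'I_n} => inord (#|G| - #|F|) : 'I_(n - #|F|).+1) xpredT) //=.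
apply: eq_bigr => j _.
have E : forall G : {set 'I_n}, F \subset G ->
    (inord (#|G| - #|F|) == j :> 'I_(n - #|F|).+1) = (#|G| == #|F| + j).
  move=> G s; have h2 := subset_leq_card s.
  have h1 : #|G| <= n by rewrite -[X in _ <= X]card_ord max_card.
  rewrite -(inj_eq val_inj) /= inordK; last by rewrite ltnS leq_sub2r.
  by rewrite -(eqn_add2l #|F|) subnKC.
rewrite (eq_bigr (fun _ => h (#|F| + j))); last first.
  by move=> G /andP[/andP[_ s]]; rewrite E // => /eqP->.
rewrite (eq_bigl (fun G => G \in [set G in fam | (F \subset G) && (#|G| == #|F| + j)])).
  by rewrite sum_nat_const.
move=> G; rewrite !inE; case s: (F \subset G); rewrite ?andbF ?andbT //=.
by rewrite E.
Qed.
Lemma ineq4 n b : 499 * n <= 1000 * b -> 24 * n^4 * (b.+2)`! <= 388 * (b.+3.+3)`!.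
Proof.
move=> h.
have h4 : (499 * n)^4 <= (1000 * b)^4 by rewrite leq_exp2r.
rewrite !expnMn in h4.
have hb : b ^ 4 <= b.+3.+3 * (b.+3.+2 * (b.+4 * b.+3)).
  rewrite !expnS expn0 muln1.
  apply: leq_mul; first lia.
  apply: leq_mul; first lia. apply: leq_mul; lia.
rewrite !factS.
set X := n ^ 4 in h4 *; set Y := b ^ 4 in h4 hb.
set Z := b.+3.+3 * (b.+3.+2 * (b.+4 * b.+3)) in hb.
have hz : 24 * X <= 388 * Z by lia.
rewrite [X in _ <= X](_ : _ = 388 * Z * (b.+2)`!); last by rewrite /Z -!mulnA.
by rewrite leq_mul2r hz orbT.
Qed.
Lemma ineq5 n b : 499 * n <= 1000 * b -> (100 * 1000) <= n ->
  120 * n^4 * (b.+1)`! <= (b.+3.+3)`!.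
Proof.
move=> h hn.
have h5 : (499 * n)^5 <= (1000 * b)^5 by rewrite leq_exp2r.
rewrite !expnMn in h5.
have hb : b ^ 5 <= b.+3.+3 * (b.+3.+2 * (b.+4 * (b.+3 * b.+2))).
  rewrite !expnS expn0 muln1.
  apply: leq_mul; first lia. apply: leq_mul; first lia.
  apply: leq_mul; first lia. apply: leq_mul; lia.
have hn5 : (100 * 1000) * n ^ 4 <= n ^ 5 by rewrite (expnS n 4) leq_mul2r hn orbT.
rewrite !factS.
set X := n ^ 4 in hn5 *; set N5 := n ^ 5 in h5 hn5; set Y := b ^ 5 in h5 hb.
set Z := b.+3.+3 * (b.+3.+2 * (b.+4 * (b.+3 * b.+2))) in hb.
have hz : 120 * X <= Z by lia.
rewrite [X in _ <= X](_ : _ = Z * (b.+1)`!); last by rewrite /Z -!mulnA.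
by rewrite leq_mul2r hz orbT.
Qed.

Lemma ineq6 n b : 499 * n <= 1000 * b -> (100 * 1000) <= n ->
  n * (720 * n^4 * b`!) <= (b.+3.+3)`!.
Proof.
move=> h hn.
have h6 : (499 * n)^6 <= (1000 * b)^6 by rewrite leq_exp2r.
rewrite !expnMn in h6.
have hb : b ^ 6 <= b.+3.+3 * (b.+3.+2 * (b.+4 * (b.+3 * (b.+2 * b.+1)))).
  rewrite !expnS expn0 muln1.
  apply: leq_mul; first lia. apply: leq_mul; first lia.
  apply: leq_mul; first lia. apply: leq_mul; first lia. apply: leq_mul; lia.
have hn6 : (100 * 1000) * n ^ 5 <= n ^ 6 by rewrite (expnS n 5) leq_mul2r hn orbT.
have e : n * (720 * n ^ 4 * b`!) = 720 * n ^ 5 * b`!.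
  by rewrite (expnS n 4) !mulnA [n * 720]mulnC.
rewrite e !factS.
set N5 := n ^ 5 in hn6 *; set N6 := n ^ 6 in h6 hn6; set Y := b ^ 6 in h6 hb.
set Z := b.+3.+3 * (b.+3.+2 * (b.+4 * (b.+3 * (b.+2 * b.+1)))) in hb.
have hz : 720 * N5 <= Z by lia.
rewrite [X in _ <= X](_ : _ = Z * b`!); last by rewrite /Z -!mulnA.
by rewrite leq_mul2r hz orbT.
Qed.
Section PerF.
Local Open Scope ring_scope.
Variables (R : realFieldType) (eps : R) (n : nat) (fam : {set {set 'I_n}}).
Hypothesis eps0 : 0 <= eps.
Hypothesis nbig : (100 * 1000 * 10 <= n)%N.
Hypothesis hsz : forall H, H \in fam -> (499 * n + 6 * 1000 <= 1000 * (n - #|H|))%N.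

Lemma perF F : F \in fam ->
  (forall j, (4 <= j)%N -> (nabla fam F j)%:R <= eps * n%:R ^+ 4) ->
  ((\sum_(G in fam | F \subset G) (#|G| - #|F|)`! * (n - #|G|)`!)%N%:R : R)
     <= (4 + 390 * eps) * ((n - #|F|)`!)%:R.
Proof.
move=> Ff hnab.
rewrite (group_lvl fam F (fun g => (g - #|F|)`! * (n - g)`!)%N).
set m := (n - #|F|)%N.
have hF := hsz Ff.
have m6 : (6 <= m)%N by rewrite /m; lia.
set b := (m - 6)%N.
have hb : (499 * n <= 1000 * b)%N by rewrite /b /m; lia.
have em : m = b.+3.+3 by rewrite /b; lia.
rewrite (eq_bigr (fun j : 'I_m.+1 => nabla fam F j * (j`! * (m - j)`!))%N); last first.
  by move=> j _; rewrite addKn /m subnDA.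
rewrite natr_sum -(big_mkord xpredT (fun j => (nabla fam F j * (j`! * (m - j)`!))%N%:R)).
rewrite (big_cat_nat (n := 4)) //=; last by rewrite ltnS; lia.
rewrite (big_cat_nat (m := 4) (n := 5)) //=; last by rewrite ltnS; lia.
rewrite (big_cat_nat (m := 5) (n := 6)) //=; last by rewrite ltnS; lia.
rewrite !big_nat1.
set M := (m`!)%:R : R.
have S1 : \sum_(0 <= i < 4) ((nabla fam F i * (i`! * (m - i)`!))%N%:R : R) <= 4 * M.
  rewrite (_ : 4 * M = \sum_(0 <= i < 4) M); last by rewrite sumr_const_nat subn0 mulr_natl.
  rewrite big_nat_cond [X in _ <= X]big_nat_cond.
  apply: ler_sum => i /andP[/andP[_ hi] _]; rewrite ler_nat.
  rewrite -(@bin_fact m i); last by lia.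
  by rewrite leq_mul2r nabla_le_bin orbT.
have T4 : ((nabla fam F 4 * (4`! * (m - 4)`!))%N%:R : R) <= 388 * (eps * M).
  rewrite natrM.
  apply: le_trans (_ : eps * n%:R ^+ 4 * (4`! * (m - 4)`!)%:R <= _).
    by apply: ler_wpM2r => //; apply: hnab.
  rewrite -mulrA [X in _ <= X]mulrCA ler_wpM2l // -natrX -!natrM ler_nat.
  have := ineq4 hb; rewrite em (_ : (b.+3.+3 - 4 = b.+2)%N) //.
  by rewrite (_ : 4`! = 24) // mulnA [(_ * 24)%N]mulnC.
have T5 : ((nabla fam F 5 * (5`! * (m - 5)`!))%N%:R : R) <= eps * M.
  rewrite natrM.
  apply: le_trans (_ : eps * n%:R ^+ 4 * (5`! * (m - 5)`!)%:R <= _).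
    by apply: ler_wpM2r => //; apply: hnab.
  rewrite -mulrA ler_wpM2l // -natrX -natrM ler_nat.
  have n5 : (100 * 1000 <= n)%N by lia.
  have := ineq5 hb n5; rewrite em (_ : (b.+3.+3 - 5 = b.+1)%N) //.
  by rewrite (_ : 5`! = 120) // mulnA [(_ * 120)%N]mulnC.
have S6 : \sum_(6 <= i < m.+1) ((nabla fam F i * (i`! * (m - i)`!))%N%:R : R) <= eps * M.
  set X := (720 * n ^ 4 * b`!)%N.
  apply: le_trans (_ : \sum_(6 <= i < m.+1) eps * X%:R <= _).
    rewrite big_nat_cond [X in _ <= X]big_nat_cond; apply: ler_sum => i /andP[/andP[h6 hi] _].
    case: (posnP (nabla fam F i)) => [->|hpos].
      by rewrite mul0n mulr_ge0.
    have [G] := card_gt0P hpos; rewrite inE => /andP[Gf /andP[sFG /eqP cG]].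
    have hG := hsz Gf.
    have hi6 : (i + 6 <= m)%N by rewrite /m; move: hG; rewrite cG; lia.
    rewrite natrM.
    apply: le_trans (_ : eps * n%:R ^+ 4 * (i`! * (m - i)`!)%:R <= _).
      by apply: ler_wpM2r => //; apply: hnab; lia.
    rewrite -mulrA ler_wpM2l // -natrX -natrM ler_nat /X [(720 * _)%N]mulnC -mulnA.
    rewrite leq_mul2l; apply/orP; right.
    by rewrite /b fact_le6.
  rewrite sumr_const_nat -mulrnAr -mulrnA ler_wpM2l // ler_nat.
  have n6 : (100 * 1000 <= n)%N by lia.
  have := ineq6 hb n6; rewrite -em => H6.
  apply: leq_trans H6; rewrite mulnC leq_mul2r; apply/orP; right; lia.
have -> : (4 + 390 * eps) * M = 4 * M + 390 * (eps * M) by ring.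
lra.
Qed.
End PerF.
Local Open Scope ring_scope.

Lemma arith1 (R : realFieldType) (a s N : R) : a <= N / 2 + s -> s <= N / 10000 ->
  100 * 1000 * 10 <= N -> 1000 * a + (499 * N + 6 * 1000) <= 1000 * N.
Proof. move=> *; lra. Qed.

Lemma arith2 (R : realFieldType) (a N : nat) (s : R) : a%:R <= N%:R / 2 + s -> s <= N%:R / 10000 ->
  (100 * 1000 * 10 <= N)%N -> (1000 * a + (499 * N + 6 * 1000) <= 1000 * N)%N.
Proof.
move=> h1 h2 h3.
have h3' : (100 * 1000 * 10 : R) <= N%:R.
  by rewrite -(natrM R 100 1000) -natrM ler_nat.
have := @arith1 R _ _ _ h1 h2 h3'.
rewrite -(ler_nat R) (natrD R (1000 * a)) (natrD R (499 * N)) (natrM R 1000 a) (natrM R 499 N) (natrM R 6 1000) (natrM R 1000 N).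
by [].
Qed.

Lemma pow23 (R : realType) (x : R) : 10 ^+ 12 <= x -> x `^ (2 / 3) <= x / 10 ^+ 4.
Proof.
move=> hx.
have x0 : 0 <= x by apply: le_trans hx; rewrite exprn_ge0.
set y := x `^ (2 / 3).
have y0 : 0 <= y by apply: powR_ge0.
have e : y ^+ 3 = x ^+ 2.
  rewrite -powR_mulrn // /y -powRrM.
  rewrite (_ : 2 / 3 * 3%:R = 2%:R :> R); last by field.
  by rewrite powR_mulrn.
have : y ^+ 3 <= (x / 10 ^+ 4) ^+ 3.
  rewrite e expr_div_n -exprM /=.
  rewrite ler_pdivlMr; last by rewrite exprn_gt0.
  rewrite (_ : x ^+ 3 = x ^+ 2 * x); last by rewrite exprSr.
  rewrite ler_wpM2l ?exprn_ge0 //.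
rewrite ler_pXn2r // nnegrE //.
by rewrite divr_ge0 // exprn_ge0.
Qed.


Lemma main_core (R : realType) (eps : R) n (fam : {set {set 'I_n}}) :
  0 <= eps -> (100 * 1000 * 10 <= n)%N ->
  (forall H, H \in fam -> (499 * n + 6 * 1000 <= 1000 * (n - #|H|))%N) ->
  (forall F, F \in fam -> forall j : nat, (4 <= j)%N ->
       ((nabla fam F j)%:R : R) <= eps * n%:R ^+ 4) ->
  (#|fam|%:R : R) <= (4 + 390 * eps) * 'C(n, n./2)%:R.
Proof.
move=> eps0 nbig hsz' hnab.
have key1 : (\sum_(G in fam) ((#|G|)`! * (n - #|G|)`!)%N%:R : R) <= (4 + 390 * eps) * (n`!)%:R.
  rewrite -natr_sum main_id natr_sum.
  apply: le_trans (_ : \sum_(F in fam) (tc fam F)%:R * ((4 + 390 * eps) * ((n - #|F|)`!)%:R) <= _).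
    apply: ler_sum => F Ff; rewrite natrM; apply: ler_wpM2l => //.
    exact: (perF eps0 nbig hsz' Ff (hnab F Ff)).
  rewrite (eq_bigr (fun F => (4 + 390 * eps) * (tc fam F * (n - #|F|)`!)%N%:R)); last first.
    by move=> F _; rewrite natrM mulrCA.
  have c0 : 0 <= 4 + 390 * eps :> R.
    by apply: addr_ge0; [exact: ler0n | apply: mulr_ge0; [exact: ler0n | exact: eps0]].
  rewrite -mulr_sumr -natr_sum; apply: ler_wpM2l; first exact: c0.
  by rewrite ler_nat lym.
have key2 : (#|fam|%:R * (n`!)%:R : R) <=
    'C(n, n./2)%:R * \sum_(G in fam) ((#|G|)`! * (n - #|G|)`!)%N%:R.
  rewrite -sum1_card natr_sum mulr_suml mulr_sumr; apply: ler_sum => G _.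
  rewrite mul1r -natrM ler_nat.
  have Gn : (#|G| <= n)%N by rewrite -[X in (_ <= X)%N]card_ord max_card.
  by rewrite -[X in (X <= _)%N](bin_fact Gn) leq_mul2r bin_half orbT.
have nf : 0 < (n`!)%:R :> R by rewrite ltr0n fact_gt0.
rewrite -(ler_pM2r nf); apply: le_trans key2 _.
apply: le_trans (_ : 'C(n, n./2)%:R * ((4 + 390 * eps) * (n`!)%:R) <= _).
  by apply: ler_wpM2l; [exact: ler0n | exact: key1].
by rewrite mulrA [X in X * _ <= _]mulrC.
Qed.

Lemma main_sz (R : realType) n (fam : {set {set 'I_n}}) :
  (1000 * 1000 * (1000 * 1000) <= n)%N ->
  (forall F, F \in fam ->
       n%:R / 2 - (n%:R : R) `^ (2 / 3) <= #|F|%:R <= n%:R / 2 + (n%:R : R) `^ (2 / 3)) ->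
  (100 * 1000 * 10 <= n)%N /\
  (forall H, H \in fam -> (499 * n + 6 * 1000 <= 1000 * (n - #|H|))%N).
Proof.
move=> hn hsz.
have nR : (10 ^+ 12 : R) <= n%:R.
  rewrite (_ : 10 ^+ 12 = (1000 * 1000 * (1000 * 1000))%N%:R); last first.
    by rewrite !natrM; ring.
  by rewrite ler_nat.
have hs := pow23 nR.
have e4 : (10 ^+ 4 : R) = 10000 by ring.
rewrite e4 in hs.
have nbig : (100 * 1000 * 10 <= n)%N.
  apply: leq_trans hn; rewrite leq_mul //.
split => // H HF; have /andP[_ hu] := hsz H HF.
have Hn : (#|H| <= n)%N by rewrite -[X in (_ <= X)%N]card_ord max_card.
have h := arith2 hu hs nbig.
by rewrite mulnBr leq_subRL // leq_mul2l Hn orbT.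
Qed.

Theorem lemma2p5 (R : realType) (eps : R) : 0 < eps ->
  exists n0 : nat, forall n : nat, (n0 <= n)%N ->
  forall fam : {set {set 'I_n}},
    (forall F, F \in fam ->
       n%:R / 2 - (n%:R : R) `^ (2 / 3) <= #|F|%:R <= n%:R / 2 + (n%:R : R) `^ (2 / 3)) ->
    (forall F, F \in fam -> forall j : nat, (4 <= j)%N ->
       ((nabla fam F j)%:R : R) <= eps * n%:R ^+ 4) ->
    (#|fam|%:R : R) <= (4 + 400 * eps) * 'C(n, n./2)%:R.
Proof.
move=> epsp; have eps0 : 0 <= eps by apply: ltW.
exists (1000 * 1000 * (1000 * 1000))%N => n hn fam hsz hnab.
have [nbig hsz'] := main_sz (R := R) hn hsz.
apply: le_trans (main_core eps0 nbig hsz' hnab) _.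
apply: ler_wpM2r; first exact: ler0n.
rewrite lerD2l; apply: ler_wpM2r; first exact: eps0.
by rewrite ler_nat.
Qed.
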